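(* Consider the excludable public good problem with $n$ players. Let $H:2^N\to\mathbb{R}_{\ge0}\cup\{\infty\}$ be normalized, monotone and symmetric, and let $\mathcal A$ be the VCG-based mechanism with function $H$. Suppose $\mathcal A$ always covers the incurred cost and is a $\rho$-approximation to the social cost for some $\rho<\frac{n^{(1-\delta)/2}}{4}$, where $0<\delta<1$ is a constant (assume $n^{1-\delta}$ and $n^{(1-\delta)/2}$ are integers). Then there is a valuation profile on which $\mathcal A$ serves a nonempty set (so the incurred cost is $1$), the sum of payments is at least $\frac{1-\delta}{2}\ln n-1$, and $\pi(ALG)\ge(\delta\ln n-1)\cdot\pi(OPT)$.
   Context: Excludable public good problem: players $N=\{1,\dots,n\}$, each player $i$ has a private value $v_i\ge0$ for being served; an outcome is a set $S\subseteq N$ of served players; the cost is $C(S)=1$ for $S\ne\emptyset$ and $C(\emptyset)=0$. $H$ is normalized if $H(\emptyset)=0$, monotone if $S\subseteq T\Rightarrow H(S)\le H(T)$, symmetric if $H(S)=H(T)$ whenever $|S|=|T|$. The VCG-based mechanism with $H$ outputs $ALG\in\arg\max_{S\subseteq N}\sum_{i\in S}v_i-H(S)$ (some tie-breaking), for each $i$ computes $ALG^{-i}\in\arg\max_{S\subseteq N\setminus\{i\}}\sum_{j\in S}v_j-H(S)$, and charges $p_i=\left[\sum_{j\in ALG^{-i}}v_j-H(ALG^{-i})\right]-\left[\sum_{j\in ALG\setminus\{i\}}v_j-H(ALG)\right]$. It always covers the cost if $\sum_ip_i\ge C(ALG)$ for every profile. Social cost: $\pi(S)=C(S)+\sum_{i\notin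 S}v_i$; $OPT$ minimizes $\pi$; a $\rho$-approximation means $\pi(ALG)\le\rho\,\pi(OPT)$ on every profile. $\ln$ is the natural logarithm. *)

(* Defs.v *)
From Stdlib Require Import Reals.
From mathcomp Require Import all_boot.
Set Implicit Arguments. Unset Strict Implicit. Unset Printing Implicit Defensive.

Local Open Scope R_scope.

Definition sumv (n : nat) (v : 'I_n -> R) (S : {set 'I_n}) : R :=
  \big[Rplus/0]_(i in S) v i.

Definition nonneg_profile (n : nat) (v : 'I_n -> R) : Prop :=
  forall i, 0 <= v i.

(* Extended nonnegative reals R>=0 ∪ {∞}: Some x = x, None = ∞. *)
Definition xR := option R.

Definition xle (a b : xR) : Prop :=
  match a, b with
  | Some x, Some y => x <= y
  | _, None => True
  | None, Some _ => False
  end.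

Definition H_nonneg (n : nat) (H : {set 'I_n} -> xR) : Prop :=
  forall (S : {set 'I_n}) (x : R), H S = Some x -> 0 <= x.
Definition H_normalized (n : nat) (H : {set 'I_n} -> xR) : Prop :=
  H set0 = Some 0.
Definition H_monotone (n : nat) (H : {set 'I_n} -> xR) : Prop :=
  forall S T : {set 'I_n}, S \subset T -> xle (H S) (H T).
Definition H_symmetric (n : nat) (H : {set 'I_n} -> xR) : Prop :=
  forall S T : {set 'I_n}, #|S| = #|T| -> H S = H T.

(* Real part of H (used only on sets where H is finite). *)
Definition Hval (n : nat) (H : {set 'I_n} -> xR) (S : {set 'I_n}) : R :=
  match H S with Some x => x | None => 0 end.

(* S maximizes  sum_{j in S} v_j - H(S)  over all subsets of D
   (sets with H = ∞ have objective -∞). *)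
Definition is_argmax_in (n : nat) (H : {set 'I_n} -> xR) (v : 'I_n -> R)
    (D S : {set 'I_n}) : Prop :=
  S \subset D /\ (exists h, H S = Some h) /\
  forall (T : {set 'I_n}) (h : R), T \subset D -> H T = Some h -> sumv v T - h <= sumv v S - Hval H S.

(* A VCG-based mechanism with function H, with some (arbitrary, deterministic)
   tie-breaking: alg v = ALG, algm i v = ALG^{-i}. *)
Definition VCG_based (n : nat) (H : {set 'I_n} -> xR)
    (alg : ('I_n -> R) -> {set 'I_n})
    (algm : 'I_n -> ('I_n -> R) -> {set 'I_n}) : Prop :=
  forall v, nonneg_profile v ->
    is_argmax_in H v setT (alg v) /\
    forall i, is_argmax_in H v (setT :\ i) (algm i v).

Definition payment (n : nat) (H : {set 'I_n} -> xR)
    (alg : ('I_n -> R) -> {set 'I_n})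
    (algm : 'I_n -> ('I_n -> R) -> {set 'I_n}) (v : 'I_n -> R) (i : 'I_n) : R :=
  (sumv v (algm i v) - Hval H (algm i v))
  - (sumv v (alg v :\ i) - Hval H (alg v)).

Definition total_payment (n : nat) (H : {set 'I_n} -> xR)
    (alg : ('I_n -> R) -> {set 'I_n})
    (algm : 'I_n -> ('I_n -> R) -> {set 'I_n}) (v : 'I_n -> R) : R :=
  \big[Rplus/0]_(i : 'I_n) payment H alg algm v i.

Definition cost (n : nat) (S : {set 'I_n}) : R :=
  if S == set0 then 0 else 1.

Definition social_cost (n : nat) (v : 'I_n -> R) (S : {set 'I_n}) : R :=
  cost S + sumv v (~: S).

Definition is_opt (n : nat) (v : 'I_n -> R) (S : {set 'I_n}) : Prop :=
  forall T : {set 'I_n}, social_cost v S <= social_cost v T.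

Definition covers_cost (n : nat) (H : {set 'I_n} -> xR)
    (alg : ('I_n -> R) -> {set 'I_n})
    (algm : 'I_n -> ('I_n -> R) -> {set 'I_n}) : Prop :=
  forall v, nonneg_profile v -> total_payment H alg algm v >= cost (alg v).

Definition approx (n : nat) (alg : ('I_n -> R) -> {set 'I_n}) (rho : R) : Prop :=
  forall v, nonneg_profile v ->
    forall OPT : {set 'I_n}, is_opt v OPT -> social_cost v (alg v) <= rho * social_cost v OPT.

(* Main.v *)
Require Import Defs.
From Stdlib Require Import Reals Lra Lia.
Local Open Scope R_scope.

Lemma ln_le' x y : 0 < x -> x <= y -> ln x <= ln y.
Proof. intros hx [h|h]; [left; apply ln_increasing; auto| subst; lra]. Qed.

Lemma ln2_lt1 : ln 2 < 1.
Proof.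
pose proof (exp_ineq1 1 ltac:(lra)) as h.
apply Rlt_le_trans with (ln (exp 1)); [apply ln_increasing; lra| rewrite ln_exp; lra].
Qed.

Lemma INR_pos n : (0 < n)%nat -> 0 < INR n.
Proof. intros h; apply lt_0_INR; lia. Qed.

Fixpoint G (k b : nat) : R :=
  match b with O => 0 | S b' => G k b' + / INR (k + S b') end.

Lemma G_ge0 k b : 0 <= G k b.
Proof.
induction b as [|b IH]; simpl; [lra|].
pose proof (INR_pos (k + S b) ltac:(lia)) as h.
pose proof (Rinv_0_lt_compat _ h). lra.
Qed.

Lemma G_anti a k b : (a <= k)%nat -> G k b <= G a b.
Proof.
intros ak; induction b as [|b IH]; simpl; [lra|].
pose proof (INR_pos (a + S b) ltac:(lia)) as h1.
assert (/ INR (k + S b) <= / INR (a + S b)).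
{ apply Rinv_le_contravar; auto; apply le_INR; lia. }
lra.
Qed.

Lemma G_split k b c : G k (b + c) = G k b + G (k + b) c.
Proof.
induction c as [|c IH]; [rewrite Nat.add_0_r; simpl; lra|].
rewrite Nat.add_succ_r; simpl; rewrite IH.
replace (k + S (b + c))%nat with (k + b + S c)%nat by lia.
lra.
Qed.

Lemma ln_step t : ln (INR (t + 2)) - ln (INR (t + 1)) <= / INR (t + 1).
Proof.
pose proof (INR_pos (t + 1) ltac:(lia)) as h1.
set (u := / INR (t + 1)).
assert (hu : 0 < u) by (apply Rinv_0_lt_compat; auto).
assert (e : INR (t + 2) = INR (t + 1) * (1 + u)).
{ unfold u; rewrite Rmult_plus_distr_l, Rmult_1_r, Rinv_r by lra.
  rewrite !plus_INR; simpl; lra. }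
rewrite e, ln_mult by lra.
assert (ln (1 + u) <= u).
{ apply Rle_trans with (ln (exp u)); [apply ln_le'; [lra| apply exp_ineq1_le]| rewrite ln_exp; lra]. }
lra.
Qed.

Lemma G_ln k b : ln (INR (k + b + 1)) - ln (INR (k + 1)) <= G k b.
Proof.
induction b as [|b IH]; [rewrite Nat.add_0_r; simpl; lra|].
pose proof (ln_step (k + b)) as hs.
replace (k + b + 2)%nat with (k + S b + 1)%nat in hs by lia.
replace (k + b + 1)%nat with (k + S b)%nat in hs, IH by lia.
simpl G.
replace (k + S b)%nat with (k + b + 1)%nat in * by lia.
lra.
Qed.

Lemma G_lower k b : INR b <= INR (k + b) * G k b.
Proof.
induction b as [|b IH]; [simpl; lra|].
simpl G.
pose proof (INR_pos (k + S b) ltac:(lia)) as h1.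
rewrite Rmult_plus_distr_l, Rinv_r by lra.
assert (e : INR (k + S b) = INR (k + b) + 1) by (rewrite <- S_INR; f_equal; lia).
rewrite e, S_INR.
pose proof (G_ge0 k b). nra.
Qed.

Lemma G_upper j c : INR (j + 1) * G j c <= INR c.
Proof.
induction c as [|c IH]; [simpl; lra|].
simpl G.
pose proof (INR_pos (j + 1) ltac:(lia)) as h1.
assert (/ INR (j + S c) <= / INR (j + 1)).
{ apply Rinv_le_contravar; auto; apply le_INR; lia. }
rewrite S_INR, Rmult_plus_distr_l.
assert (INR (j + 1) * / INR (j + 1) = 1) by (rewrite Rinv_r; lra).
nra.
Qed.

Lemma G_concave k b c :
  INR b * G k (b + c) <= INR (b + c) * G k b.
Proof.
rewrite G_split, plus_INR.
pose proof (G_upper (k + b) c) as h1.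
pose proof (G_lower k b) as h2.
pose proof (INR_pos (k + b + 1) ltac:(lia)) as h3.
assert (e : INR (k + b + 1) = INR (k + b) + 1) by (rewrite plus_INR; simpl; lra).
pose proof (pos_INR b). pose proof (pos_INR c).
pose proof (G_ge0 k b). pose proof (G_ge0 (k + b) c).
assert (INR b * G (k + b) c <= INR c * G k b); [|nra].
assert (INR b * (INR (k + b + 1) * G (k + b) c) <= INR c * (INR (k+b) * G k b)) by nra.
rewrite e in *. nra.
Qed.
From HB Require Import structures.
From mathcomp Require Import all_boot zify.
Local Open Scope R_scope.
From mathcomp Require Import all_boot.
Local Open Scope R_scope.
HB.instance Definition _ := Monoid.isComLaw.Build R 0 Rplus (fun a b c => esym (Rplus_assoc a b c)) Rplus_comm Rplus_0_l.

Lemma iter_plus c x : iter c (Rplus x) 0 = INR c * x.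
Proof. elim: c => [|c IH]; first (simpl; lra). rewrite iterS IH S_INR; lra. Qed.

Lemma sumv_const n (S : {set 'I_n}) c : sumv (fun _ => c) S = INR #|S| * c.
Proof. by rewrite /sumv big_const iter_plus. Qed.

Definition pre n k : {set 'I_n} := [set i : 'I_n | (i < k)%N].

Lemma card_pre n k : (k <= n)%N -> #|pre n k| = k.
Proof.
move=> kn; rewrite -sum1_card.
rewrite (eq_bigl (fun i : 'I_n => (i < k)%N)); last by move=> i; rewrite inE.
by rewrite (big_ord_narrow kn) sum1_card card_ord.
Qed.

Lemma sumv_two n k x y (S : {set 'I_n}) :
  sumv (fun i : 'I_n => if (i < k)%N then x else y) S =
  INR #|S :&: pre n k| * x + INR #|S :\: pre n k| * y.
Proof.
rewrite /sumv (bigID (fun i => i \in pre n k)) /=.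
rewrite (eq_bigr (fun _ => x)); last by move=> i /andP [_]; rewrite inE => ->.
rewrite [X in _ + X](eq_bigr (fun _ => y)); last first.
  move=> i /andP [_]. rewrite inE. move=> /negbTE. move=> ->. by [].
rewrite (eq_bigl (fun i => i \in S :&: pre n k)); last by move=> i; rewrite in_setI.
rewrite [X in _ + X](eq_bigl (fun i => i \in S :\: pre n k)); last by move=> i; rewrite in_setD andbC.
by rewrite !big_const !iter_plus.
Qed.

Lemma sum_two_all n k a b : (k <= n)%N ->
  \big[Rplus/0]_(i : 'I_n) (if (i < k)%N then a else b) = INR k * a + INR (n - k) * b.
Proof.
move=> kn.
have := sumv_two n k a b [set: 'I_n]; rewrite /sumv.
rewrite (eq_bigl (fun i => true)); last by move=> i; rewrite inE.
move=> ->; rewrite setTI card_pre // setTD.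
have := cardsC (pre n k); rewrite card_pre // card_ord => e.
have e2 : #|~: pre n k| = (n - k)%N by rewrite -[in RHS]e addKn.
by rewrite e2.
Qed.

Lemma big_le n (F G : 'I_n -> R) : (forall i, F i <= G i) ->
  \big[Rplus/0]_(i : 'I_n) F i <= \big[Rplus/0]_(i : 'I_n) G i.
Proof.
move=> FG; apply: (big_ind2 (fun a b => a <= b)); [lra| |by []].
move=> ? ? ? ? ? ?; lra.
Qed.

Lemma sumv_ge0 n (v : 'I_n -> R) S : nonneg_profile v -> 0 <= sumv v S.
Proof.
move=> nv; rewrite /sumv; apply: (big_ind (fun a => 0 <= a)); [lra| |by []].
move=> ? ? ? ?; lra.
Qed.

Set Implicit Arguments. Unset Strict Implicit.

Definition obj n (H : {set 'I_n} -> xR) (v : 'I_n -> R) (S : {set 'I_n}) :=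
  sumv v S - Hval H S.

Lemma vcg_alg n H alg algm (v : 'I_n -> R) : VCG_based H alg algm -> nonneg_profile v ->
  (forall S, H S = Some (Hval H S)) -> forall T, obj H v T <= obj H v (alg v).
Proof.
move=> hV nv hf T; have [[_ [_ hmax]] _] := hV v nv.
exact: (hmax T (Hval H T) (subsetT T) (hf T)).
Qed.

Lemma vcg_algm n H alg algm (v : 'I_n -> R) : VCG_based H alg algm -> nonneg_profile v ->
  (forall S, H S = Some (Hval H S)) -> forall (i : 'I_n) (T : {set 'I_n}), T \subset setT :\ i ->
  obj H v T <= obj H v (algm i v).
Proof.
move=> hV nv hf i T hT; have [_ hm] := hV v nv; have [_ [_ hmax]] := hm i.
exact: (hmax T (Hval H T) hT (hf T)).
Qed.

Lemma vcg_algm_sub n H alg algm (v : 'I_n -> R) : VCG_based H alg algm -> nonneg_profile v ->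
  forall i, algm i v \subset setT :\ i.
Proof. by move=> hV nv i; have [_ hm] := hV v nv; have [] := hm i. Qed.

Lemma payE n H alg algm (v : 'I_n -> R) i :
  payment H alg algm v i = obj H v (algm i v) - (sumv v (alg v :\ i) - Hval H (alg v)).
Proof. by []. Qed.

Lemma sumv_D1 n (v : 'I_n -> R) (S : {set 'I_n}) (i : 'I_n) : i \in S -> sumv v S = v i + sumv v (S :\ i).
Proof.
move=> iS; rewrite /sumv (bigD1 i) //=; congr Rplus.
by apply: eq_bigl => j; rewrite !inE andbC.
Qed.

Lemma setD1_notin n (S : {set 'I_n}) i : i \notin S -> S :\ i = S.
Proof.
move=> iS; apply/setP => j; rewrite !inE.
case: eqP => // ->; by rewrite (negbTE iS).
Qed.

Lemma social_ge_cost n (v : 'I_n -> R) (S : {set 'I_n}) : nonneg_profile v -> social_cost v S >= cost S.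
Proof. move=> nv; rewrite /social_cost; have := sumv_ge0 n v (~: S) nv; lra. Qed.

Lemma cost_ge0 n (S : {set 'I_n}) : 0 <= cost S.
Proof. rewrite /cost; case: ifP => _; lra. Qed.

Lemma setT_ne0 n : (1 <= n)%N -> [set: 'I_n] != set0.
Proof.
move=> hn; apply/set0Pn; exists (Ordinal hn); by rewrite inE.
Qed.

Lemma cost_ne0 n (S : {set 'I_n}) : S != set0 -> cost S = 1.
Proof. by rewrite /cost => /negbTE ->. Qed.

Lemma social_setT n (v : 'I_n -> R) : (1 <= n)%N -> social_cost v setT = 1.
Proof.
move=> hn; rewrite /social_cost cost_ne0 ?setT_ne0 // setCT /sumv big_set0; lra.
Qed.

Lemma step1 n (H : {set 'I_n} -> xR) (alg : ('I_n -> R) -> {set 'I_n})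
  (algm : 'I_n -> ('I_n -> R) -> {set 'I_n}) rho : (1 <= n)%N -> H_monotone H -> VCG_based H alg algm ->
  approx alg rho -> (forall S, H S = Some (Hval H S)) /\ 1 <= rho.
Proof.
move=> hn hmo hV hap.
set V := Rmax rho 1 + 1.
have hV1 : 1 <= V by rewrite /V; have := Rmax_r rho 1; lra.
have hVr : rho < V by rewrite /V; have := Rmax_l rho 1; lra.
set v := fun _ : 'I_n => V.
have nv : nonneg_profile v by move=> i; rewrite /v; lra.
have opt : is_opt v setT.
  move=> T; rewrite social_setT //.
  case: (eqVneq T set0) => [->|hT].
    rewrite /social_cost /cost eqxx setC0 sumv_const.
    have : (1 <= INR #|[set: 'I_n]|) by rewrite cardsT card_ord; apply: (le_INR 1); apply/leP.
    nra.
  have := social_ge_cost T nv; rewrite cost_ne0 //; lra.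
have hA := hap v nv setT opt; rewrite social_setT // Rmult_1_r in hA.
have eA : alg v = setT.
  apply/eqP; rewrite eqEsubset subsetT /=; apply/subsetP => i _.
  apply/negPn/negP => hi.
  have : V <= sumv v (~: alg v).
    rewrite sumv_const.
    have : (1 <= INR #|~: alg v|).
      apply: (le_INR 1); apply/leP; apply/card_gt0P; exists i; by rewrite inE.
    nra.
  have := cost_ge0 (alg v); rewrite /social_cost in hA; lra.
have [[_ [[h hh] _]] _] := hV v nv.
rewrite eA in hh.
split.
  move=> S; have := hmo S setT (subsetT S); rewrite hh /Hval.
  by case: (H S).
by rewrite eA social_setT in hA.
Qed.

Definition hh n (H : {set 'I_n} -> xR) j := Hval H (pre n j).

Lemma card_le_n n (S : {set 'I_n}) : (#|S| <= n)%N.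
Proof. by rewrite -[X in (_ <= X)%N](card_ord n) max_card. Qed.

Lemma Hval_card n (H : {set 'I_n} -> xR) : H_symmetric H -> forall S, Hval H S = hh H #|S|.
Proof. by move=> hs S; rewrite /hh /Hval (hs S (pre n #|S|)) // card_pre // card_le_n. Qed.

Lemma hh_mono n (H : {set 'I_n} -> xR) a b : H_monotone H -> (forall S, H S = Some (Hval H S)) ->
  (a <= b)%N -> hh H a <= hh H b.
Proof.
move=> hmo hf ab; have : pre n a \subset pre n b.
  by apply/subsetP => i; rewrite !inE => h; exact: leq_trans h ab.
move=> /hmo; rewrite /hh (hf (pre n a)) (hf (pre n b)) //.
Qed.

Lemma hh0 n (H : {set 'I_n} -> xR) : H_normalized H -> H_symmetric H -> hh H 0 = 0.
Proof. move=> hN hs; by rewrite -(cards0 'I_n) -Hval_card // /Hval hN. Qed.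

Lemma hh_ge0 n (H : {set 'I_n} -> xR) j : H_nonneg H -> (forall S, H S = Some (Hval H S)) -> 0 <= hh H j.
Proof. move=> hnn hf; rewrite /hh; exact: (hnn _ _ (hf _)). Qed.

Lemma INR_pred j : (1 <= j)%N -> INR j = INR j.-1 + 1.
Proof. by move=> hj; rewrite -S_INR prednK. Qed.

Lemma step2 n (H : {set 'I_n} -> xR) (alg : ('I_n -> R) -> {set 'I_n})
  (algm : 'I_n -> ('I_n -> R) -> {set 'I_n}) j :
  (1 <= j)%N -> (j <= n)%N -> H_nonneg H -> H_normalized H -> H_monotone H -> H_symmetric H ->
  VCG_based H alg algm -> covers_cost H alg algm ->
  (forall S, H S = Some (Hval H S)) ->
  1 <= INR j * (hh H j - hh H j.-1).
Proof.
move=> hj1 hjn hnn hN hmo hs hV hcov hf.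
set V := hh H n + 1.
have hhn : forall a, (a <= n)%N -> 0 <= hh H a < V.
  move=> a an; split; first exact: hh_ge0.
  have := hh_mono hmo hf an; rewrite /V; lra.
have hV0 : 0 < V by have := hhn 0%N (leq0n n); lra.
clearbody V.
set v := fun i : 'I_n => if (i < j)%N then V else 0.
have nv : nonneg_profile v by move=> i; rewrite /v; case: ifP => _; lra.
set K := pre n j.
have hobj : forall S, obj H v S = INR #|S :&: K| * V - hh H #|S|.
  move=> S; rewrite /obj /v sumv_two Hval_card // -/K; lra.
have hale : forall S : {set 'I_n}, (#|S :&: K| <= j)%N.
  by move=> S; rewrite -[X in (_ <= X)%N](card_pre n j hjn) subset_leq_card // subsetIr.
have hacard : forall S : {set 'I_n}, (#|S :&: K| <= #|S|)%N.
  by move=> S; rewrite subset_leq_card // subsetIl.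
have KB : forall S : {set 'I_n}, (#|S :&: K| <= j.-1)%N ->
    obj H v S <= INR j.-1 * V - hh H j.-1.
  move=> S hS; rewrite hobj.
  have h1 := hh_mono hmo hf (hacard S).
  have ha0 := hh_ge0 #|S :&: K| hnn hf.
  move: #|S :&: K| hS h1 ha0 => a hS h1 ha0.
  have hj' : (j.-1 <= n)%N by rewrite (leq_trans (leq_pred j)).
  have hh1 := hhn _ hj'.
  case: (ltngtP a j.-1) => [lt| gt | eq].
  - have hlt : INR a + 1 <= INR j.-1 by rewrite -S_INR; apply: le_INR; apply/leP.
    have := Rmult_le_compat_r V _ _ (Rlt_le _ _ hV0) hlt. lra.
  - by move: (leq_trans gt hS); rewrite ltnn.
  - rewrite -eq; lra.
have objK : obj H v K = INR j * V - hh H j.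
  by rewrite hobj setIid /K card_pre.
have hA := vcg_alg hV nv hf.
have hcovA := hcov v nv.
have hAa : #|(alg v) :&: K| = j.
  apply/eqP; rewrite eqn_leq hale /= leqNgt; apply/negP => hlt.
  have hlt' : (#|(alg v) :&: K| <= j.-1)%N by rewrite -ltnS prednK.
  have h := KB (alg v) hlt'.
  have := hA K; rewrite objK.
  have := hh_mono hmo hf (leq_pred j).
  have := hhn j hjn. have := hh_ge0 j.-1 hnn hf.
  rewrite (INR_pred hj1) => *; nra.
have hAh : hh H #|(alg v)| <= hh H j.
  have := hA K; rewrite objK hobj hAa; lra.
have KA : K \subset (alg v).
  have : (alg v) :&: K == K.
    rewrite eqEcard subsetIr hAa /= /K card_pre //.
  move=> /eqP <-; exact: subsetIl.
have Ane : (alg v) != set0.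
  apply/negP => /eqP A0; move: hAa; rewrite A0 set0I cards0 => j0.
  by move: hj1; rewrite -j0.
rewrite cost_ne0 // in hcovA.
set D := hh H j - hh H j.-1.
have hsumA : sumv v (alg v) = INR j * V.
  by rewrite sumv_two hAa; lra.
have hp : forall i, payment H alg algm v i <= (if (i < j)%N then D else 0).
  move=> i; rewrite payE Hval_card //.
  case: ifP => hij.
  - have iK : i \in K by rewrite inE.
    have iA : i \in (alg v) by exact: (subsetP KA).
    have hsub := vcg_algm_sub hV nv i.
    have : (#|algm i v :&: K| <= j.-1)%N.
      have : algm i v :&: K \subset K :\ i.
        apply/subsetP => x; rewrite !inE => /andP [hx ->]; rewrite andbT.
        by move: (subsetP hsub x hx); rewrite !inE => /andP [].
      have e2 : #|K :\ i| = j.-1.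
        have cK : #|K| = j by rewrite /K card_pre.
        move: (cardsD1 i K); rewrite iK cK => ->.
        by rewrite /nat_of_bool add1n.
      by move=> /subset_leq_card; rewrite e2.
    move=> /KB hk.
    have vi : v i = V by rewrite /v hij.
    have := sumv_D1 v iA; rewrite hsumA vi (INR_pred hj1) => e.
    rewrite /D; lra.
  - have e : sumv v ((alg v) :\ i) = sumv v (alg v).
      case: (boolP (i \in (alg v))) => iA; last by rewrite setD1_notin.
      have vi : v i = 0 by rewrite /v hij.
      by rewrite (sumv_D1 v iA) vi; lra.
    rewrite e; have := hA (algm i v); rewrite /obj !Hval_card //; lra.
have := big_le _ _ _ hp; rewrite sum_two_all // /total_payment.
move: hcovA; rewrite /total_payment /D; lra.
Qed.

Lemma incr n (H : {set 'I_n} -> xR) :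
  (forall j, (1 <= j)%N -> (j <= n)%N -> 1 <= INR j * (hh H j - hh H j.-1)) ->
  forall a b, (a + b <= n)%N -> G a b <= hh H (a + b) - hh H a.
Proof.
move=> hst a; elim=> [|b IH] hab.
  by rewrite addn0 /=; lra.
have eG : G a b.+1 = G a b + / INR (a + b).+1 by rewrite -addnS.
have hab' : (a + b <= n)%N by lia.
have hab2 : ((a + b).+1 <= n)%N by lia.
have := IH hab'.
have hj := hst (a + b).+1 (ltn0Sn _) hab2; rewrite succnK in hj.
have hp : 0 < INR (a + b).+1 by apply: INR_pos; apply/ltP.
rewrite eG addnS => h1.
have : / INR (a + b).+1 <= hh H (a + b).+1 - hh H (a + b).
  have h2 := Rmult_le_compat_l (/ INR (a + b).+1) _ _ (Rlt_le _ _ (Rinv_0_lt_compat _ hp)) hj.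
  rewrite -Rmult_assoc Rinv_l in h2; last by apply: Rgt_not_eq.
  lra.
move=> h3; lra.
Qed.

Lemma card_compl n (S : {set 'I_n}) : #|~: S| = (n - #|S|)%N.
Proof. have := cardsC S; rewrite card_ord => e; lia. Qed.

Lemma step3 n (H : {set 'I_n} -> xR) (alg : ('I_n -> R) -> {set 'I_n})
  (algm : 'I_n -> ('I_n -> R) -> {set 'I_n}) rho x :
  (1 <= n)%N -> H_normalized H -> H_symmetric H -> VCG_based H alg algm ->
  approx alg rho -> (forall S, H S = Some (Hval H S)) ->
  0 <= x -> 1 <= INR n * x ->
  exists j, (j <= n)%N /\ INR (n - j) * x <= rho /\ hh H j <= INR j * x.
Proof.
move=> hn hN hs hV hap hf hx hnx.
set v := fun _ : 'I_n => x.
have nv : nonneg_profile v by move=> i.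
have opt : is_opt v setT.
  move=> T; rewrite social_setT //.
  case: (eqVneq T set0) => [->|hT].
    by rewrite /social_cost /cost eqxx setC0 sumv_const cardsT card_ord; lra.
  have := social_ge_cost T nv; rewrite cost_ne0 //; lra.
have hA := hap v nv setT opt; rewrite social_setT // Rmult_1_r in hA.
have hmax := vcg_alg hV nv hf set0.
exists #|alg v|; split; first exact: card_le_n.
split.
  move: hA; rewrite /social_cost sumv_const card_compl.
  have := cost_ge0 (alg v); lra.
move: hmax; rewrite /obj /sumv big_set0 -/(sumv v (alg v)) sumv_const !Hval_card // cards0.
rewrite (hh0 hN hs); lra.
Qed.

Lemma argmin_nat (f : nat -> R) r : (1 <= r)%N ->
  exists k, (1 <= k)%N /\ (k <= r)%N /\ forall j, (1 <= j)%N -> (j <= r)%N -> f k <= f j.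
Proof.
elim: r => [//|r IH] _.
case: (posnP r) => [->|hr].
  exists 1%N; split; first done; split; first done; move=> j h1 h2.
  have -> : j = 1%N by lia.
  lra.
have [k [hk1 [hkr hk]]] := IH hr.
case: (Rle_dec (f k) (f r.+1)) => hc.
  exists k; split; first done; split; first lia; move=> j h1 h2.
  case: (ltngtP j r.+1) => [lt|gt|->]; [apply: hk; lia|lia|exact: hc].
exists r.+1; split; first done; split; first done; move=> j h1 h2.
case: (ltngtP j r.+1) => [lt|gt|->]; [|lia|lra].
have := hk j h1 ltac:(lia); lra.
Qed.

Lemma sumv_set0 n (v : 'I_n -> R) : sumv v set0 = 0.
Proof. by rewrite /sumv big_set0. Qed.

Lemma le_div a b c : 0 < c -> a * c <= b -> a <= b / c.
Proof. move=> hc h; apply: (Rmult_le_reg_r c) => //; rewrite /Rdiv Rmult_assoc Rinv_l; lra. Qed.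

Lemma step5 n (H : {set 'I_n} -> xR) (alg : ('I_n -> R) -> {set 'I_n})
  (algm : 'I_n -> ('I_n -> R) -> {set 'I_n}) k :
  (1 <= k)%N -> (k < n)%N -> H_nonneg H -> H_normalized H -> H_monotone H -> H_symmetric H ->
  VCG_based H alg algm -> (forall S, H S = Some (Hval H S)) ->
  (forall a b, (a + b <= n)%N -> G a b <= hh H (a + b) - hh H a) ->
  (forall a, (1 <= a)%N -> (a <= k)%N -> INR a * hh H k <= INR k * hh H a) ->
  let x := hh H k / INR k + / (2 * INR k * INR k) in
  let y := G k (n - k) / INR (n - k) - / (2 * INR n) in
  let v := fun i : 'I_n => if (i < k)%N then x else y in
  nonneg_profile v /\ alg v = pre n k /\
  total_payment H alg algm v >= hh H k - / 2 /\
  social_cost v (alg v) >= / 2 + G k (n - k).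
Proof.
move=> hk1 hkn hnn hN hmo hs hV hf hinc hmin x y v.
have kpos : 0 < INR k by apply: INR_pos; apply/ltP.
have npos : 0 < INR n by apply: INR_pos; apply/ltP; lia.
have nkpos : 0 < INR (n - k) by apply: INR_pos; apply/ltP; lia.
set eta := / (2 * INR k * INR k).
set eps := / (2 * INR n).
have heta : 0 < eta by apply: Rinv_0_lt_compat; nra.
have heps : 0 < eps by apply: Rinv_0_lt_compat; nra.
have hk0 := hh_ge0 k hnn hf.
have hx : 0 <= x.
  rewrite /x -/eta; have : 0 <= hh H k / INR k by apply: Rmult_le_pos => //; apply: Rlt_le; apply: Rinv_0_lt_compat.
  lra.
have Gn : INR (n - k) <= INR n * G k (n - k).
  have := G_lower k (n - k).
  have -> : Nat.add k (n - k) = n by rewrite plusE subnKC // ltnW.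
  done.
have hy : eps <= y.
  rewrite /y -/eps.
  have : 2 * eps <= G k (n - k) / INR (n - k).
    apply: le_div => //.
    have -> : 2 * eps = / INR n by rewrite /eps; field; lra.
    apply: (Rmult_le_reg_l (INR n)) => //.
    rewrite -Rmult_assoc Rinv_r; lra.
  lra.
have nv : nonneg_profile v by move=> i; rewrite /v; case: ifP => _; lra.
set K := pre n k.
have cK : #|K| = k by rewrite /K card_pre // ltnW.
have hobj : forall S, obj H v S = INR #|S :&: K| * x + INR #|S :\: K| * y - hh H (#|S :&: K| + #|S :\: K|).
  move=> S; rewrite /obj /v sumv_two Hval_card // -/K cardsID; lra.
have KB : forall a b, (a <= k)%N -> (b <= n - k)%N ->
    INR a * x + INR b * y - hh H (a + b) <= INR a * eta - INR b * eps.
  move=> a b ha hb.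
  have C1 : INR a * x - hh H a <= INR a * eta.
    case: (posnP a) => [->|ha0].
      rewrite (hh0 hN hs) /=; lra.
    have := hmin a ha0 ha.
    rewrite /x -/eta => h.
    have : INR a * (hh H k / INR k) <= hh H a.
      have -> : INR a * (hh H k / INR k) = (INR a * hh H k) / INR k by rewrite /Rdiv Rmult_assoc.
      apply: (Rmult_le_reg_r (INR k)) => //.
      rewrite /Rdiv Rmult_assoc Rinv_l; lra.
    lra.
  have C2 : INR b * y <= G k b - INR b * eps.
    have := G_concave k b (n - k - b).
    have -> : Nat.add b (n - k - b) = (n - k)%N by rewrite plusE subnKC.
    move=> h.
    have : INR b * (G k (n - k) / INR (n - k)) <= G k b.
      have -> : INR b * (G k (n - k) / INR (n - k)) = (INR b * G k (n - k)) / INR (n - k) by rewrite /Rdiv Rmult_assoc.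
      apply: (Rmult_le_reg_r (INR (n - k))) => //.
      rewrite /Rdiv Rmult_assoc Rinv_l; lra.
    rewrite /y -/eps; lra.
  have C3 := G_anti a k b ltac:(lia).
  have C4 := hinc a b ltac:(lia).
  lra.
have objK : obj H v K = INR k * eta.
  rewrite hobj setIid setDv cards0 cK addn0 /x -/eta.
  have -> : INR 0 = 0 by []. field; lra.
have hcardI : forall S : {set 'I_n}, (#|S :&: K| <= k)%N.
  by move=> S; rewrite -[X in (_ <= X)%N]cK subset_leq_card // subsetIr.
have hcardD : forall S : {set 'I_n}, (#|S :\: K| <= n - k)%N.
  move=> S; rewrite -cK -card_compl subset_leq_card //.
  by apply/subsetP => i; rewrite !inE => /andP [].
have hA := vcg_alg hV nv hf.
have [ea eb] : #|alg v :&: K| = k /\ #|alg v :\: K| = 0%N.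
  have := hA K; rewrite objK hobj.
  have := KB _ _ (hcardI (alg v)) (hcardD (alg v)).
  have := le_INR _ _ (elimT leP (hcardI (alg v))).
  have := pos_INR #|alg v :\: K|.
  move: #|alg v :&: K| #|alg v :\: K| (hcardI (alg v)) => a b hak h1 h2 h3 h4.
  have ea : INR a = INR k by nra.
  have eb : INR b = 0 by nra.
  by split; apply: INR_eq.
have eA : alg v = K.
  apply/eqP; rewrite eqEcard -setD_eq0 -cards_eq0 eb eqxx /=.
  by rewrite cK -(cardsID K (alg v)) ea eb addn0.
rewrite eA; split; first done; split; first done.
have hsK : sumv v K = INR k * x.
  by rewrite /v sumv_two -/K setIid setDv cards0 cK /=; lra.
split.
  have hp : forall i : 'I_n, (if (i < k)%N then hh H k - (INR k * x - x) else 0) <= payment H alg algm v i.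
    move=> i; rewrite payE eA; case: ifP => hik.
    - have iK : i \in K by rewrite inE.
      have := vcg_algm hV nv hf (sub0set (setT :\ i)).
      rewrite /obj sumv_set0 !(Hval_card hs) cards0 (hh0 hN hs) cK.
      have vi : v i = x by rewrite /v hik.
      have := sumv_D1 v iK; rewrite hsK vi => *; lra.
    - have iK : i \notin K by rewrite inE hik.
      rewrite setD1_notin //.
      have hsub : K \subset setT :\ i.
        by apply/subsetP => j jK; rewrite !inE andbT; apply/eqP => e; move: iK; rewrite -e jK.
      have := vcg_algm hV nv hf hsub; move=> h; apply: Rge_le; apply: Rge_minus; apply: Rle_ge; exact: h.
  have hsum := big_le _ _ _ hp.
  rewrite (sum_two_all n k _ _ (ltnW hkn)) in hsum.
  have e : INR k * (hh H k - (INR k * x - x)) + INR (n - k) * 0 = hh H k - (INR k - 1) / (2 * INR k).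
    rewrite /x /eta; field; lra.
  rewrite e in hsum.
  have : (INR k - 1) / (2 * INR k) <= / 2.
    apply: (Rmult_le_reg_r (2 * INR k)); first lra.
    rewrite /Rdiv Rmult_assoc Rinv_l; last lra.
    lra.
  rewrite /total_payment; lra.
have Kne : K != set0 by rewrite -card_gt0 cK.
have c1 : #|~: K :&: K| = 0%N by rewrite setIC setICr cards0.
have c2 : #|~: K :\: K| = (n - k)%N.
  have := cardsID K (~: K); rewrite c1 card_compl cK add0n //.
rewrite /social_cost cost_ne0 // /v sumv_two -/K c1 c2.
have -> : INR 0 = 0 by [].
have : INR (n - k) * eps <= / 2.
  rewrite /eps; apply: (Rmult_le_reg_r (2 * INR n)); first lra.
  rewrite Rmult_assoc Rinv_l; last lra.
  have := le_INR _ _ (elimT leP (leq_subr k n)); lra.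
rewrite /y; have -> : INR (n - k) * (G k (n - k) / INR (n - k) - eps) = G k (n - k) - INR (n - k) * eps.
  by field; lra.
lra.
Qed.

Theorem theorem5p1 (n : nat) (H : {set 'I_n} -> xR)
    (alg : ('I_n -> R) -> {set 'I_n})
    (algm : 'I_n -> ('I_n -> R) -> {set 'I_n}) (rho delta : R) :
  (1 <= n)%nat ->
  H_nonneg H -> H_normalized H -> H_monotone H -> H_symmetric H ->
  VCG_based H alg algm ->
  covers_cost H alg algm ->
  approx alg rho ->
  0 < delta < 1 ->
  (exists k : nat, INR k = Rpower (INR n) (1 - delta)) ->
  (exists k : nat, INR k = Rpower (INR n) ((1 - delta) / 2)) ->
  rho < Rpower (INR n) ((1 - delta) / 2) / 4 ->
  exists v : 'I_n -> R,
    nonneg_profile v /\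
    alg v != set0 /\
    total_payment H alg algm v >= (1 - delta) / 2 * ln (INR n) - 1 /\
    (forall OPT : {set 'I_n}, is_opt v OPT ->
       social_cost v (alg v) >= (delta * ln (INR n) - 1) * social_cost v OPT).
Proof.
move=> hn hnn hN hmo hs hV hcov hap hd [km hkm] [ks hks] hrho.
have [hf hr1] := step1 hn hmo hV hap.
have hks4 : 4 < INR ks by rewrite hks; lra.
have n2 : (1 < n)%N.
  case: (ltngtP 1 n) => [//|lt|e]; first lia.
  move: hks; rewrite -e /Rpower /= ln_1 Rmult_0_r exp_0 => e1; lra.
have hn1 : 1 < INR n by apply: (lt_INR 1); apply/ltP.
have lnpos : 0 < ln (INR n) by rewrite -ln_1; apply: ln_increasing; lra.
have eks : ln (INR ks) = (1 - delta) / 2 * ln (INR n) by rewrite hks ln_Rpower.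
have ekm : ln (INR km) = (1 - delta) * ln (INR n) by rewrite hkm ln_Rpower.
have kmks : INR km = INR ks * INR ks.
  rewrite hkm hks -Rpower_plus; congr Rpower; field.
have kmn : (km < n)%N.
  apply/ltP; apply: INR_lt; rewrite hkm -{2}(Rpower_1 (INR n)); last lra.
  apply: Rpower_lt; lra.
have km1 : (1 <= km)%N by apply/leP; apply: INR_le; rewrite kmks /=; nra.
have [r [hr2 hr3]] : exists r, (km <= 2 * r)%N /\ (2 * r <= km.+1)%N.
  exists (km.+1)./2; have := odd_double_half km.+1; rewrite -muln2.
  case: (odd km.+1) => /= e; lia.
have r1 : (1 <= r)%N by lia.
have rkm : (r <= km)%N by lia.
have rn : (2 * r <= n)%N by lia.
have rpos : 0 < INR r by apply: INR_pos; apply/ltP.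
have nrpos : 0 < INR (n - r) by apply: INR_pos; apply/ltP; lia.
have ekm2 : INR km <= 2 * INR r.
  have := le_INR _ _ (elimT leP hr2); rewrite mult_INR /=; lra.
have en2 : INR n <= 2 * INR (n - r).
  have hh2 : (n <= 2 * (n - r))%N by lia.
  have := le_INR _ _ (elimT leP hh2); rewrite mult_INR /=; lra.
set x := rho / INR (n - r).
have hx0 : 0 <= x by rewrite /x; apply: Rmult_le_pos; [lra|apply: Rlt_le; apply: Rinv_0_lt_compat].
have nrn : INR (n - r) <= INR n by apply: le_INR; apply/leP; exact: leq_subr.
have hnx : 1 <= INR n * x.
  rewrite /x; apply: (Rmult_le_reg_r (INR (n - r))) => //.
  rewrite /Rdiv -Rmult_assoc Rmult_assoc Rinv_l; nra.
have [j [hjn [hj1 hj2]]] := step3 hn hN hs hV hap hf hx0 hnx.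
have rj : (r <= j)%N.
  have : INR (n - j) <= INR (n - r).
    move: hj1; rewrite /x => h.
    apply: (Rmult_le_reg_r rho); first lra.
    have : INR (n - j) * (rho / INR (n - r)) * INR (n - r) <= rho * INR (n - r) by nra.
    have -> : INR (n - j) * (rho / INR (n - r)) * INR (n - r) = INR (n - j) * rho by field; lra.
    lra.
  move/INR_le/leP; lia.
have hhr : INR ks * hh H r < INR r.
  have h1 := hh_mono hmo hf rj.
  have h2 : INR j * x <= INR n * x by apply: Rmult_le_compat_r => //; apply: le_INR; apply/leP.
  have h3 : INR ks * (INR n * x) < INR r.
    rewrite /x; apply: (Rmult_lt_reg_r (INR (n - r))) => //.
    have -> : INR ks * (INR n * (rho / INR (n - r))) * INR (n - r) = INR ks * INR n * rho by field; lra.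
    have : INR ks * INR n * rho < INR ks * INR n * (INR ks / 4).
      apply: Rmult_lt_compat_l; first nra. by rewrite hks.
    have : INR ks * INR n * (INR ks / 4) <= INR r * INR (n - r).
      have -> : INR ks * INR n * (INR ks / 4) = INR km * INR n / 4 by rewrite kmks; field.
      have := Rmult_le_compat _ _ _ _ (pos_INR km) (pos_INR n) ekm2 en2. lra.
    lra.
  nra.
have [k [k1 [kr hk]]] := argmin_nat (fun j => hh H j / INR j) r1.
have kpos : 0 < INR k by apply: INR_pos; apply/ltP.
have hmin : forall a, (1 <= a)%N -> (a <= k)%N -> INR a * hh H k <= INR k * hh H a.
  move=> a a1 ak; have := hk a a1 (leq_trans ak kr) => /= h.
  have apos : 0 < INR a by apply: INR_pos; apply/ltP.
  have := Rmult_le_compat_l (INR a * INR k) _ _ ltac:(nra) h.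
  have -> : INR a * INR k * (hh H k / INR k) = INR a * hh H k by field; lra.
  have -> : INR a * INR k * (hh H a / INR a) = INR k * hh H a by field; lra.
  done.
have hst : forall j, (1 <= j)%N -> (j <= n)%N -> 1 <= INR j * (hh H j - hh H j.-1).
  by move=> j0 h1 h2; apply: (step2 h1 h2 hnn hN hmo hs hV hcov hf).
have hinc := incr hst.
have hh1 : 1 <= hh H k.
  have := hst 1%N (leqnn _) (ltnW n2); rewrite /= (hh0 hN hs) Rmult_1_l Rminus_0_r.
  have := hh_mono hmo hf k1; lra.
have kks : INR ks < INR k.
  have := hk r r1 (leqnn r) => /= h.
  have : INR ks * hh H k < INR k.
    have e1 : hh H k = INR k * (hh H k / INR k) by field; lra.
    have e2 : hh H r = INR r * (hh H r / INR r) by field; lra.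
    rewrite e2 in hhr. rewrite e1.
    have : INR ks * (hh H r / INR r) < 1.
      apply: (Rmult_lt_reg_l (INR r)) => //. nra.
    have : 0 <= hh H k / INR k.
      apply: Rmult_le_pos; [exact: hh_ge0|apply: Rlt_le; apply: Rinv_0_lt_compat => //].
    nra.
  nra.
have kn : (k < n)%N by lia.
move: (step5 k1 kn hnn hN hmo hs hV hf hinc hmin) => /=.
set v := (fun _ => _).
move=> [nv [eA [hpay hsoc]]].
exists v; split; first exact: nv.
split.
  by rewrite eA -card_gt0 card_pre // ltnW.
split.
  have hG := hinc 0%N k (ltnW kn); rewrite add0n (hh0 hN hs) Rminus_0_r in hG.
  have hl := G_ln 0 k.
  rewrite (_ : Nat.add (Nat.add 0 k) 1 = k.+1) in hl; last by lia.
  rewrite (_ : INR (Nat.add 0 1) = 1) in hl; last by [].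
  rewrite ln_1 Rminus_0_r in hl.
  have : ln (INR ks) <= ln (INR k.+1).
    apply: ln_le'; first lra. rewrite S_INR; lra.
  move: hpay; lra.
move=> OPT hopt.
have p1 : social_cost v OPT <= 1 by have := hopt setT; rewrite social_setT.
have p0 : 0 <= social_cost v OPT.
  have := cost_ge0 OPT; have := sumv_ge0 n v (~: OPT) nv; rewrite /social_cost; lra.
have hl := G_ln k (n - k).
rewrite (_ : Nat.add (Nat.add k (n - k)) 1 = n.+1) in hl; last by lia.
rewrite (_ : Nat.add k 1 = k.+1) in hl; last by lia.
have l1 : ln (INR n) <= ln (INR n.+1) by apply: ln_le'; [lra|rewrite S_INR; lra].
have l2 : ln (INR k.+1) <= ln 2 + ln (INR km).
  rewrite -ln_mult; [|lra|apply: INR_pos; apply/ltP; lia].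
  apply: ln_le'; first (apply: INR_pos; lia).
  have hh2 : (k.+1 <= 2 * km)%N by lia.
  have := le_INR _ _ (elimT leP hh2); rewrite mult_INR /=; lra.
have l3 := ln2_lt1.
set c := delta * ln (INR n) - 1.
have hsc : c + / 2 <= social_cost v (alg v) by rewrite /c; lra.
case: (Rle_dec 0 c) => hc.
  have := Rmult_le_compat_l c _ _ hc p1. lra.
have : c * social_cost v OPT <= 0 by nra.
have := cost_ge0 (alg v); have := sumv_ge0 n v (~: alg v) nv; rewrite /social_cost; lra.
Qed.
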